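(* Let $p$ be a prime and $k,\ell$ integers with $k>0$, $\ell\ge0$; put $q=p^k$ and $Q=p^{\ell}$. Let $\Gamma$ be the set of roots in $\mathbb{F}_{q^3}$ of $X^{q^2}+X^q+X$. Then the polynomial $(X^q-X)\circ X^{Q+1}=X^{q(Q+1)}-X^{Q+1}$ permutes $\Gamma$ (i.e. maps $\Gamma$ bijectively onto $\Gamma$) if and only if $\gcd(q-1,Q+1)=1$, or equivalently, if and only if $p=2$ and $\operatorname{ord}_2(k)\le\operatorname{ord}_2(\ell)$.
   Context: For a nonzero integer $N$, $\operatorname{ord}_2(N)$ is the largest integer $s\ge0$ with $2^s\mid N$, and $\operatorname{ord}_2(0)=\infty$. *)

(* Defs.v *)
From HB Require Import structures.
From mathcomp Require Import all_boot all_order all_algebra all_field.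
Set Implicit Arguments. Unset Strict Implicit. Unset Printing Implicit Defensive.
Import GRing.Theory.
Local Open Scope ring_scope.

(* 2-adic valuation with ord_2(0) = infinity, encoded as None. *)
Definition ord2 (n : nat) : option nat :=
  if n == 0%N then None else Some (logn 2 n).

Definition ole (a b : option nat) : bool :=
  match b with
  | None => true
  | Some b' => match a with None => false | Some a' => (a' <= b')%N end
  end.

Definition Gamma (F : finFieldType) (q : nat) : {set F} :=
  [set x : F | x ^+ (q ^ 2) + x ^+ q + x == 0].

Definition permutes_set (T : finType) (f : T -> T) (A : {set T}) : Prop :=
  {in A, forall x, f x \in A} /\ {in A &, injective f}.

(* Main.v *)
Require Import Defs.
From HB Require Import structures.
From mathcomp Require Import all_boot all_order all_algebra all_field.
From mathcomp Require Import ring zify.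
From mathcomp Require cyclic.
Import GRing.Theory.
Local Open Scope ring_scope.

Set Implicit Arguments. Unset Strict Implicit.


Lemma c2E {F : fieldType} (t : F) {a b : F} : 2%:R = 0 :> F -> a - b = 2%:R * t -> a = b.
Proof. by move=> h2 h; apply/eqP; rewrite -subr_eq0 h h2 mul0r. Qed.
Arguments c2E {F} t {a b}.

Lemma c2opp (F : fieldType) (a : F) : 2%:R = 0 :> F -> - a = a.
Proof. by move=> h2; apply: (c2E (-a) h2); ring. Qed.

Lemma iter_pow (F : fieldType) (Q j : nat) (a : F) :
  iter j (fun z => z ^+ Q) a = a ^+ (Q ^ j).
Proof. by elim: j => [|j IH]; rewrite ?expr1 //= IH expnSr exprM. Qed.

Lemma qroot1 (F : fieldType) (Q j : nat) (w : F) :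
  2%:R = 0 :> F -> odd j -> (forall a : F, iter j (fun z => z ^+ Q) a = a) ->
  w ^+ Q.+1 = 1 -> w = 1.
Proof.
move=> h2 oj hit hw.
have w0 : w != 0.
  by apply/eqP=> w0; move: hw; rewrite w0 expr0n /= => /esym/eqP; rewrite oner_eq0.
have hQ : w ^+ Q = w^-1 by rewrite -[w ^+ Q](mulfK w0) -exprSr hw mul1r.
have hi : forall i, iter i (fun z => z ^+ Q) w = if odd i then w^-1 else w.
  elim=> [|i IH] //=; rewrite IH; case: (odd i) => //=.
  by rewrite exprVn hQ invrK.
have := hi j; rewrite hit oj => hww.
have : (w - 1) ^+ 2 = 0.
  have e : w * w = 1 by rewrite {1}hww mulVf.
  apply: (c2E (1 - w) h2). rewrite subr0. 
  have -> : (w - 1) ^+ 2 = w * w - 2%:R * w + 1 by ring.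
  rewrite e; ring.
by move/eqP; rewrite expf_eq0 /= subr_eq0 => /eqP.
Qed.


Lemma inFq (F : fieldType) (q Q j : nat) (u e : F) :
  2%:R = 0 :> F -> odd j -> (forall a : F, iter j (fun z => z ^+ Q) a = a) ->
  (0 < q)%N -> u ^+ Q.+1 = e -> e ^+ q = e -> u ^+ q = u.
Proof.
move=> h2 oj hit q0 hu he.
have [->|u0] := eqVneq u 0; first by rewrite expr0n eqn0Ngt q0.
have e0 : e != 0 by rewrite -hu expf_neq0.
have w1 : (u ^+ q / u) ^+ Q.+1 = 1.
  by rewrite exprMn exprVn exprAC hu he divff.
have hw := qroot1 h2 oj hit w1.
by rewrite -[u ^+ q](divfK u0) hw mul1r.
Qed.

Lemma gam0 (F : fieldType) (q : nat) (u : F) :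
  u ^+ q ^+ q = u ^+ q + u -> u ^+ q = u -> u = 0.
Proof.
move=> h hu; rewrite !hu in h.
by apply: (addrI u); rewrite -h addr0.
Qed.

Lemma caseD0 (F : fieldType) (q Q j : nat) (x y : F) :
  2%:R = 0 :> F -> odd j -> (forall a : F, iter j (fun z => z ^+ Q) a = a) ->
  (0 < q)%N -> (forall a b : F, (a + b) ^+ q = a ^+ q + b ^+ q) ->
  x ^+ q ^+ q = x ^+ q + x -> y ^+ q ^+ q = y ^+ q + y ->
  (x ^+ Q.+1 + y ^+ Q.+1) ^+ q = x ^+ Q.+1 + y ^+ Q.+1 ->
  x * y ^+ q + x ^+ q * y = 0 -> x = y.
Proof.
move=> h2 oj hit q0 Hq hx hy hc hD.
have hxy : x * y ^+ q = x ^+ q * y.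
  have e : x * y ^+ q = - (x ^+ q * y) by apply/eqP; rewrite -subr_eq0 opprK hD.
  by rewrite e c2opp.
have [x0|x0] := eqVneq x 0.
  rewrite x0 expr0n /= add0r in hc.
  have := inFq h2 oj hit q0 (erefl _) hc => hyq.
  by rewrite x0 (gam0 hy hyq).
pose l := y / x.
have xq0 : x ^+ q != 0 by rewrite expf_neq0.
have hl : l ^+ q = l.
  rewrite /l exprMn exprVn; apply/eqP; rewrite eqr_div //; apply/eqP.
  by rewrite mulrC hxy mulrC.
have yl : y = l * x by rewrite /l divfK.
have hc2 : x ^+ Q.+1 + y ^+ Q.+1 = x ^+ Q.+1 * (1 + l ^+ Q.+1).
  by rewrite yl exprMn; ring.
have [l1|l1] := eqVneq (l ^+ Q.+1) 1.
  by rewrite yl (qroot1 h2 oj hit l1) mul1r.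
have n0 : 1 + l ^+ Q.+1 != 0.
  apply: contra_neq l1 => h.
  by rewrite -[l ^+ Q.+1](addKr 1) h addr0 c2opp.
have hx1 : x ^+ Q.+1 = (x ^+ Q.+1 + y ^+ Q.+1) / (1 + l ^+ Q.+1) by rewrite hc2 mulfK.
have hn : (1 + l ^+ Q.+1) ^+ q = 1 + l ^+ Q.+1 by rewrite Hq expr1n exprAC hl.
have hxq : x ^+ q = x.
  apply: (inFq h2 oj hit q0 hx1).
  by rewrite exprMn exprVn hc hn.
by move: x0; rewrite (gam0 hx hxq) eqxx.
Qed.


Lemma sfix_aux (F : fieldType) (q Q : nat) (u v D c s : F) :
  2%:R = 0 :> F ->
  (forall a b : F, (a + b) ^+ q = a ^+ q + b ^+ q) ->
  (forall a b : F, (a + b) ^+ Q = a ^+ Q + b ^+ Q) ->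
  (forall a : F, a ^+ q ^+ q ^+ q = a) ->
  u ^+ q ^+ q = u ^+ q + u -> v ^+ q ^+ q = v ^+ q + v ->
  D ^+ q = D -> c ^+ q = c ->
  u ^+ Q * D = c * v ^+ q + s * v ->
  (s ^+ q ^+ q - s ^+ q) * v ^+ q + (s ^+ q ^+ q - s) * v = 0.
Proof.
move=> h2 Hq HQ Hq3 hu hv hD hc h.
have h1 : (u ^+ Q) ^+ q * D = c * (v ^+ q + v) + s ^+ q * v ^+ q.
  by have := congr1 (fun z => z ^+ q) h; rewrite /= Hq !exprMn hD hc hv.
have hh : (u ^+ Q) ^+ q ^+ q * D = c * v + s ^+ q ^+ q * (v ^+ q + v).
  have := congr1 (fun z => z ^+ q ^+ q) h.
  by rewrite /= !Hq !exprMn !hD !hc Hq3 hv.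
have e : (u ^+ Q) ^+ q ^+ q = (u ^+ Q) ^+ q + u ^+ Q.
  by rewrite !(exprAC _ Q) hu HQ.
rewrite e mulrDl h1 h in hh.
move: hh; set vq := v ^+ q; set s1 := s ^+ q; set s2 := s1 ^+ q => hh.
apply: (c2E (c * vq) h2).
have -> : (s2 - s1) * vq + (s2 - s) * v - 0 =
   (c * v + s2 * (vq + v)) - (c * (vq + v) + s1 * vq + (c * vq + s * v)) + 2%:R * (c * vq) by ring.
by rewrite hh subrr add0r.
Qed.

Lemma stepQ (F : fieldType) (q Q : nat) (u v a b al be : F) :
  (forall a b : F, (a + b) ^+ q = a ^+ q + b ^+ q) ->
  (forall a b : F, (a + b) ^+ Q = a ^+ Q + b ^+ Q) ->
  v ^+ q ^+ q = v ^+ q + v -> a ^+ q = a -> b ^+ q = b ->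
  u ^+ Q = a * v ^+ q + b * v ->
  (al * u ^+ q + be * u) ^+ Q =
    (al ^+ Q * (a + b) + be ^+ Q * a) * v ^+ q + (al ^+ Q * a + be ^+ Q * b) * v.
Proof.
move=> Hq HQ hv ha hb hu.
rewrite HQ !exprMn (exprAC u q Q) hu Hq !exprMn ha hb hv.
set vq := v ^+ q; set A := al ^+ Q; set B := be ^+ Q; ring.
Qed.

Lemma fixQ (F : fieldType) (q Q : nat) (a : F) : a ^+ q = a -> (a ^+ Q) ^+ q = a ^+ Q.
Proof. by move=> h; rewrite exprAC h. Qed.

Lemma iterQ (F : fieldType) (q Q : nat) (x y a b : F) :
  (0 < q)%N ->
  (forall a b : F, (a + b) ^+ q = a ^+ q + b ^+ q) ->
  (forall a b : F, (a + b) ^+ Q = a ^+ Q + b ^+ Q) ->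
  x ^+ q ^+ q = x ^+ q + x -> y ^+ q ^+ q = y ^+ q + y ->
  a ^+ q = a -> b ^+ q = b ->
  x ^+ Q = a * y ^+ q + b * y -> y ^+ Q = a * x ^+ q + b * x ->
  forall j, exists al be : F, [/\ al ^+ q = al, be ^+ q = be,
    iter j (fun z => z ^+ Q) x =
      al * (if odd j then y else x) ^+ q + be * (if odd j then y else x) &
    iter j (fun z => z ^+ Q) y =
      al * (if odd j then x else y) ^+ q + be * (if odd j then x else y)].
Proof.
move=> q0 Hq HQ hx hy ha hb hxQ hyQ; elim=> [|j [al [be [hal hbe ex ey]]]].
  exists 0, 1; rewrite expr0n eqn0Ngt q0 expr1n /=; split=> //; ring.
have fq : (al ^+ Q * (a + b) + be ^+ Q * a) ^+ q = al ^+ Q * (a + b) + be ^+ Q * a.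
  by rewrite Hq !exprMn Hq ha hb !fixQ.
have fq2 : (al ^+ Q * a + be ^+ Q * b) ^+ q = al ^+ Q * a + be ^+ Q * b.
  by rewrite Hq !exprMn ha hb !fixQ.
exists (al ^+ Q * (a + b) + be ^+ Q * a), (al ^+ Q * a + be ^+ Q * b).
rewrite !iterS ex ey /=; case: (odd j) => /=; split=> //.
- exact: stepQ.
- exact: stepQ.
- exact: stepQ.
- exact: stepQ.
Qed.

Lemma finalD (F : fieldType) (q : nat) (x y al be : F) :
  2%:R = 0 :> F ->
  (forall a b : F, (a + b) ^+ q = a ^+ q + b ^+ q) ->
  x ^+ q ^+ q = x ^+ q + x -> y ^+ q ^+ q = y ^+ q + y ->
  al ^+ q = al -> be ^+ q = be ->
  x = al * y ^+ q + be * y -> y = al * x ^+ q + be * x ->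
  x * y ^+ q + x ^+ q * y = 0.
Proof.
move=> h2 Hq hx hy hal hbe ex ey.
have hxq : x ^+ q = al * (y ^+ q + y) + be * y ^+ q.
  by rewrite [in LHS]ex Hq !exprMn hal hbe hy.
have hyq : y ^+ q = al * (x ^+ q + x) + be * x ^+ q.
  by rewrite [in LHS]ey Hq !exprMn hal hbe hx.
have eY : y = al ^+ 2 * y ^+ q + al ^+ 2 * y + 2%:R * al * be * y ^+ q + be ^+ 2 * y.
  rewrite [in LHS]ey hxq ex; set yq := y ^+ q; ring.
have eX : x = al ^+ 2 * x ^+ q + al ^+ 2 * x + 2%:R * al * be * x ^+ q + be ^+ 2 * x.
  rewrite [in LHS]ex hyq ey; set xq := x ^+ q; ring.
have key : al ^+ 2 * (x * y ^+ q + x ^+ q * y) = 0.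
  set xq := x ^+ q; set yq := y ^+ q.
  have -> : al ^+ 2 * (x * yq + xq * y) =
     x * ((al ^+ 2 * yq + al ^+ 2 * y + 2%:R * al * be * yq + be ^+ 2 * y) - y)
   + y * ((al ^+ 2 * xq + al ^+ 2 * x + 2%:R * al * be * xq + be ^+ 2 * x) - x)
   + 2%:R * (- (al ^+ 2 + be ^+ 2 - 1) * x * y - al * be * (x * yq + xq * y)) by ring.
  by rewrite -eY -eX !subrr !mulr0 h2 mul0r !addr0.
move/eqP: key; rewrite mulf_eq0 expf_eq0 /= => /orP[/eqP a0|/eqP //].
rewrite a0 mul0r add0r in ex.
rewrite ex exprMn hbe; set yq := y ^+ q.
by apply: (c2E (be * y * yq) h2); rewrite subr0; ring.
Qed.

Lemma hard (F : fieldType) (q Q j : nat) (x y : F) :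
  2%:R = 0 :> F -> odd j -> (forall a : F, iter j (fun z => z ^+ Q) a = a) ->
  (0 < q)%N ->
  (forall a b : F, (a + b) ^+ q = a ^+ q + b ^+ q) ->
  (forall a b : F, (a + b) ^+ Q = a ^+ Q + b ^+ Q) ->
  (forall a : F, a ^+ q ^+ q ^+ q = a) ->
  x ^+ q ^+ q = x ^+ q + x -> y ^+ q ^+ q = y ^+ q + y ->
  (x ^+ Q.+1 + y ^+ Q.+1) ^+ q = x ^+ Q.+1 + y ^+ Q.+1 ->
  x = y.
Proof.
move=> h2 oj hit q0 Hq HQ Hq3 hx hy hc.
have [D0|Dnz] := eqVneq (x * y ^+ q + x ^+ q * y) 0.
  exact: (caseD0 h2 oj hit q0 Hq hx hy hc D0).
exfalso.
have hD : (x * y ^+ q + x ^+ q * y) ^+ q = x * y ^+ q + x ^+ q * y.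
  rewrite Hq !exprMn hx hy; set xq := x ^+ q; set yq := y ^+ q.
  by apply: (c2E (xq * yq) h2); ring.
have hx1 : x ^+ Q * (x * y ^+ q + x ^+ q * y) =
   (x ^+ Q.+1 + y ^+ Q.+1) * y ^+ q + (x ^+ Q * x ^+ q + y ^+ Q * y ^+ q) * y.
  rewrite !exprSr; set xq := x ^+ q; set yq := y ^+ q; set xQ := x ^+ Q; set yQ := y ^+ Q.
  by apply: (c2E (- (yQ * y * yq)) h2); ring.
have hy1 : y ^+ Q * (x * y ^+ q + x ^+ q * y) =
   (x ^+ Q.+1 + y ^+ Q.+1) * x ^+ q + (x ^+ Q * x ^+ q + y ^+ Q * y ^+ q) * x.
  rewrite !exprSr; set xq := x ^+ q; set yq := y ^+ q; set xQ := x ^+ Q; set yQ := y ^+ Q.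
  by apply: (c2E (- (xQ * x * xq)) h2); ring.
move: Dnz hD hx1 hy1 hc.
set D := x * y ^+ q + x ^+ q * y; set c := x ^+ Q.+1 + y ^+ Q.+1.
set s := x ^+ Q * x ^+ q + y ^+ Q * y ^+ q => Dnz hD hx1 hy1 hc.
have Ey := sfix_aux h2 Hq HQ Hq3 hx hy hD hc hx1.
have Ex := sfix_aux h2 Hq HQ Hq3 hy hx hD hc hy1.
move: Ey Ex; set s1 := s ^+ q; set s2 := s1 ^+ q => Ey Ex.
have e1 : (s2 - s1) * D = 0.
  move: Ey Ex; rewrite /D; set xq := x ^+ q; set yq := y ^+ q => Ey Ex.
  have -> : (s2 - s1) * (x * yq + xq * y) =
    x * ((s2 - s1) * yq + (s2 - s) * y) - y * ((s2 - s1) * xq + (s2 - s) * x)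
    + 2%:R * ((s2 - s1) * xq * y) by ring.
  by rewrite Ey Ex !mulr0 subrr h2 mul0r addr0.
move/eqP: e1; rewrite mulf_eq0 (negbTE Dnz) orbF subr_eq0 => /eqP e1.
rewrite e1 subrr mul0r add0r in Ey.
rewrite e1 subrr mul0r add0r in Ex.
have e2 : s1 - s = 0.
  apply/eqP; move: Dnz; apply: contraR => ne.
  move/eqP: Ey; rewrite mulf_eq0 (negbTE ne) /= => /eqP y0.
  move/eqP: Ex; rewrite mulf_eq0 (negbTE ne) /= => /eqP x0.
  by rewrite /D x0 y0 !mul0r mulr0 addr0.
have hs : s ^+ q = s by apply/eqP; rewrite -subr_eq0 -/s1 e2.
have ha : (c / D) ^+ q = c / D by rewrite exprMn exprVn hc hD.
have hb : (s / D) ^+ q = s / D by rewrite exprMn exprVn hs hD.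
have hxQ : x ^+ Q = c / D * y ^+ q + s / D * y.
  apply: (mulIf Dnz); rewrite hx1; move: Dnz; set yq := y ^+ q => Dnz; field; exact: Dnz.
have hyQ : y ^+ Q = c / D * x ^+ q + s / D * x.
  apply: (mulIf Dnz); rewrite hy1; move: Dnz; set xq := x ^+ q => Dnz; field; exact: Dnz.
have [al [be [hal hbe ex ey]]] := iterQ q0 Hq HQ hx hy ha hb hxQ hyQ j.
rewrite oj !hit in ex ey.
by move: Dnz; rewrite /D (finalD h2 Hq hx hy hal hbe ex ey) eqxx.
Qed.


Lemma mp1_dvd (m t : nat) : (m.+1 %| ((m ^ 2) ^ t).-1)%N.
Proof.
apply: (dvdn_trans _ (dvdn_pred_predX _ _)).
have -> : ((m ^ 2).-1 = m.-1 * m.+1)%N.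
  case: m => [|m] //=; lia.
exact: dvdn_mull.
Qed.

Lemma mp1_odd (m o : nat) : odd o -> (m.+1 %| m ^ o + 1)%N.
Proof.
move=> oo; case: m => [|m]; first exact: dvd1n.
rewrite -(odd_double_half o) oo add1n.
set t := o./2.
have h1 : (0 < (m.+1 ^ 2) ^ t)%N by rewrite !expn_gt0.
have e : (m.+1 ^ (t.*2).+1 = m.+1 * (m.+1 ^ 2) ^ t)%N by rewrite expnS -mul2n expnM.
have -> : (m.+1 ^ (t.*2).+1 + 1 = m.+1 * ((m.+1 ^ 2) ^ t).-1 + m.+2)%N.
  rewrite e; move: h1; set X := ((m.+1 ^ 2) ^ t)%N => h1.
  rewrite -(prednK h1) mulnS; lia.
by apply: dvdn_add; [apply: dvdn_mull; exact: mp1_dvd | ].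
Qed.

Lemma NT1 (p k l : nat) : prime p -> (0 < k)%N ->
  gcdn (p ^ k - 1) (p ^ l + 1) = 1%N -> p = 2%N /\ ole (ord2 k) (ord2 l).
Proof.
move=> hp k0 hg.
have p2 : p = 2%N.
  case: (even_prime hp) => // podd.
  have : (2 %| gcdn (p ^ k - 1) (p ^ l + 1))%N.
    rewrite dvdn_gcd !dvdn2 oddD oddB ?expn_gt0 ?prime_gt0 // !oddX podd !orbT.
    by [].
  by rewrite hg.
split=> //; subst p.
rewrite /ord2 (negbTE (lt0n_neq0 k0)).
case: eqP => [//|/eqP l0] /=.
rewrite leqNgt; apply/negP => lt.
have l0' : (0 < l)%N by rewrite lt0n.
set a := logn 2 l in lt.
have pr2 : prime 2 by [].
have [o cop lo] := pfactor_coprime pr2 l0'.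
rewrite coprime2n in cop.
have : (2 ^ a.+1 %| k)%N by rewrite pfactor_dvdn.
case/dvdnP => k2 hk.
set m := (2 ^ (2 ^ a))%N.
have d1 : (m.+1 %| 2 ^ k - 1)%N.
  have -> : (2 ^ k = (m ^ 2) ^ k2)%N by rewrite hk -!expnM expnSr; congr (2 ^ _)%N; ring.
  rewrite subn1; exact: mp1_dvd.
have d2 : (m.+1 %| 2 ^ l + 1)%N.
  have -> : (2 ^ l = m ^ o)%N by rewrite lo -expnM mulnC.
  exact: mp1_odd.
have : (m.+1 %| 1)%N by rewrite -hg dvdn_gcd d1 d2.
rewrite dvdn1 => /eqP [] /eqP; rewrite expn_eq0 //.
Qed.

Lemma NT2 (k l : nat) : (0 < k)%N -> ole (ord2 k) (ord2 l) ->
  exists j m : nat, odd j /\ (l * j = 3 * k * m)%N.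
Proof.
move=> k0; rewrite /ord2 (negbTE (lt0n_neq0 k0)).
have pr2 : prime 2 by [].
have [k' cop hk] := pfactor_coprime pr2 k0.
rewrite coprime2n in cop.
case: eqP => [l0 _|/eqP l0 /= hle].
  by exists (3 * k')%N, 0%N; rewrite l0 oddM cop muln0.
have l0' : (0 < l)%N by rewrite lt0n.
have : (2 ^ logn 2 k %| l)%N by rewrite pfactor_dvdn.
case/dvdnP => l' hl.
exists (3 * k')%N, l'; split; first by rewrite oddM cop.
by rewrite {1}hl {2}hk; ring.
Qed.


Lemma frobD (F : finFieldType) (p n : nat) : p \in [pchar F] ->
  forall a b : F, (a + b) ^+ (p ^ n) = a ^+ (p ^ n) + b ^+ (p ^ n).
Proof.
move=> hp a b; apply: exprDn_pchar.
by rewrite (eq_pnat _ (pcharf_eq hp)) pnatX pnat_id ?(pcharf_prime hp).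
Qed.

Lemma frobB (F : finFieldType) (q : nat) : (0 < q)%N ->
  (forall a b : F, (a + b) ^+ q = a ^+ q + b ^+ q) ->
  forall a b : F, (a - b) ^+ q = a ^+ q - b ^+ q.
Proof.
move=> q0 Hq a b.
have hn : (- b) ^+ q = - b ^+ q.
  apply/eqP; rewrite -subr_eq0 opprK addrC -Hq subrr expr0n eqn0Ngt q0 //.
by rewrite Hq hn.
Qed.

Lemma imgL (F : finFieldType) (q : nat) : (0 < q)%N ->
  (forall a b : F, (a + b) ^+ q = a ^+ q + b ^+ q) ->
  (forall a : F, a ^+ q ^+ q ^+ q = a) ->
  forall u : F, u ^+ q - u \in Gamma F q.
Proof.
move=> q0 Hq Hq3 u; rewrite inE -mulnn exprM !(frobB q0 Hq) Hq3.
set u1 := u ^+ q; set u2 := u1 ^+ q.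
by apply/eqP; ring.
Qed.

Lemma primF (F : finFieldType) : exists z : F, (#|F|.-1).-primitive_root z.
Proof.
have c1 := finNzRing_gt1 F.
have n0 : (0 < #|F|.-1)%N by rewrite -ltnS prednK // ltnW.
have ha : all (#|F|.-1).-unity_root (enum (predC1 (0 : F))).
  apply/allP => x; rewrite mem_enum /= => x0; rewrite unity_rootE.
  apply/eqP; apply: (mulIf x0); rewrite mul1r -exprSr prednK ?expf_card //.
  exact: ltnW.
have hs : (#|F|.-1 <= size (enum (predC1 (0%R : F))))%N by rewrite -cardE cardC1.
have := cyclic.has_prim_root n0 ha (enum_uniq _) hs.
by case/hasP => z _ hz; exists z.
Qed.

Lemma gam2 (F : fieldType) (q : nat) (u : F) : 2%:R = 0 :> F ->
  u ^+ (q ^ 2) + u ^+ q + u == 0 -> u ^+ q ^+ q = u ^+ q + u.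
Proof.
move=> h2 /eqP h; rewrite -mulnn exprM in h.
move: h; set a := u ^+ q ^+ q; set b := u ^+ q => h.
apply: (c2E (- (b + u)) h2).
have -> : a - (b + u) = (a + b + u) + 2%:R * (- (b + u)) by ring.
by rewrite h add0r.
Qed.

Lemma fc2 (F : fieldType) (q Q : nat) (x y : F) :
  (forall a b : F, (a + b) ^+ q = a ^+ q + b ^+ q) -> 2%:R = 0 :> F ->
  x ^+ (q * (Q + 1)) - x ^+ (Q + 1) = y ^+ (q * (Q + 1)) - y ^+ (Q + 1) ->
  (x ^+ Q.+1 + y ^+ Q.+1) ^+ q = x ^+ Q.+1 + y ^+ Q.+1.
Proof.
move=> Hq h2; rewrite addn1 !(mulnC q) !exprM Hq => h.
move: h; set X := x ^+ Q.+1; set Y := y ^+ Q.+1.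
set Xq := X ^+ q; set Yq := Y ^+ q => h.
apply: (c2E (Yq - Y) h2).
have -> : Xq + Yq - (X + Y) = (Xq - X - (Yq - Y)) + 2%:R * (Yq - Y) by ring.
by rewrite h subrr add0r.
Qed.

Lemma powcard (F : finFieldType) (m : nat) (a : F) : a ^+ (#|F| ^ m) = a.
Proof. by elim: m => [|m IH]; rewrite ?expr1 // expnSr exprM IH expf_card. Qed.


Unset Implicit Arguments.

Theorem theorem1p6 (p k l : nat) (F : finFieldType) :
  prime p -> (0 < k)%N -> #|F| = ((p ^ k) ^ 3)%N ->
  let q := (p ^ k)%N in
  let Q := (p ^ l)%N in
  (permutes_set (fun x : F => x ^+ (q * (Q + 1)) - x ^+ (Q + 1)) (Gamma F q)
     <-> gcdn (q - 1) (Q + 1) = 1%N)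
  /\ (gcdn (q - 1) (Q + 1) = 1%N <-> (p = 2%N /\ ole (ord2 k) (ord2 l))).
Proof.
move=> hp k0 hF q Q.
have p0 : (0 < p)%N := prime_gt0 hp.
have q0 : (0 < q)%N by rewrite expn_gt0 p0.
have q1 : (1 < q)%N.
  by rewrite /q -(prednK k0) expnS (leq_trans (prime_gt1 hp)) // leq_pmulr // expn_gt0 p0.
have hpc : p \in [pchar F].
  by apply: (@card_finPcharP _ _ (k * 3)%N) => //; rewrite hF expnM.
have Hq : forall a b : F, (a + b) ^+ q = a ^+ q + b ^+ q := @frobD F p k hpc.
have HQ : forall a b : F, (a + b) ^+ Q = a ^+ Q + b ^+ Q := @frobD F p l hpc.
have hFq : #|F| = (q * q * q)%N by rewrite hF /q !expnS expn0 muln1 mulnA.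
have Hq3 : forall a : F, a ^+ q ^+ q ^+ q = a by move=> a; rewrite -!exprM ?mulnA -hFq expf_card.
have into : forall x : F, x ^+ (q * (Q + 1)) - x ^+ (Q + 1) \in Gamma F q.
  by move=> x; rewrite mulnC exprM; exact: imgL.
have char2 : p = 2%N /\ ole (ord2 k) (ord2 l) ->
    2%:R = 0 :> F /\ exists j, odd j /\ forall a : F, iter j (fun z => z ^+ Q) a = a.
  case=> p2 hole; split; first by rewrite -p2; exact: pcharf0 hpc.
  have [j [m [oj hlj]]] := NT2 k0 hole.
  exists j; split=> // a; rewrite iter_pow.
  have -> : (Q ^ j = #|F| ^ m)%N.
    by rewrite /Q -expnM hlj hF -!expnM; congr (p ^ _)%N; ring.
  exact: powcard.
set G := gcdn (q - 1) (Q + 1).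
have hG : (0 < G)%N by rewrite gcdn_gt0 addn1 orbT.
have zeta : G != 1%N -> exists zt : F, [/\ zt ^+ (Q + 1) = 1, zt ^+ q = zt, zt != 1 &
     exists2 x0 : F, x0 \in Gamma F q & x0 != 0].
  move=> hne.
  have hG1 : (1 < G)%N by rewrite ltn_neqAle eq_sym hne hG.
  have [z hz] := primF F.
  have dGN : (G %| #|F|.-1)%N.
    apply: (dvdn_trans (dvdn_gcdl _ _)).
    by rewrite subn1 hF (dvdn_pred_predX q 3).
  have hzt := dvdn_prim_root hz dGN.
  set zt := z ^+ (#|F|.-1 %/ G) in hzt.
  have ztQ : zt ^+ (Q + 1) = 1 by apply/eqP; rewrite -(prim_order_dvd hzt) dvdn_gcdr.
  have ztq1 : zt ^+ (q - 1) = 1 by apply/eqP; rewrite -(prim_order_dvd hzt) dvdn_gcdl.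
  exists zt; split=> //.
  - by rewrite -{1}(subnK q0) addn1 exprS ztq1 mulr1.
  - by apply/negP => /eqP h; move: (prim_order_dvd hzt 1); rewrite expr1 h eqxx dvdn1 => /eqP h1; move: hG1; rewrite h1.
  exists (z ^+ q - z); first exact: imgL.
  rewrite subr_eq0; apply/negP => /eqP hzq.
  have z0 : z != 0 by rewrite (prim_root_eq0 hz) -lt0n -ltnS prednK ?(ltnW (finNzRing_gt1 F)) // finNzRing_gt1.
  have : (#|F|.-1 %| q.-1)%N.
    rewrite (prim_order_dvd hz); apply/eqP; apply: (mulIf z0).
    by rewrite mul1r -exprSr prednK // hzq.
  move/dvdn_leq; rewrite -subn1 subn_gt0 => /(_ q1).
  rewrite hF; have : (q < q ^ 3)%N by rewrite -{1}(expn1 q) ltn_exp2l.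
  rewrite -/q; lia.
split.
- split.
  + case=> _ inj; apply/eqP; apply/negPn/negP => hne.
    have [zt [ztQ ztq zt1 [x0 hx0 x00]]] := zeta hne.
    have hzx : zt * x0 \in Gamma F q.
      rewrite inE !exprMn -mulnn exprM !ztq -!mulrDr mulf_eq0.
      by move: hx0; rewrite inE -mulnn exprM => ->; rewrite orbT.
    have := inj _ _ hzx hx0.
    have -> : (zt * x0) ^+ (q * (Q + 1)) - (zt * x0) ^+ (Q + 1) =
              x0 ^+ (q * (Q + 1)) - x0 ^+ (Q + 1).
      by rewrite !exprMn mulnC exprM ztQ expr1n !mul1r.
    move=> /(_ erefl) h; move: zt1; rewrite -[x0 in _ = x0]mul1r in h.
    by rewrite (mulIf x00 h) eqxx.
  + move=> hg; have [p2 hole] := NT1 hp k0 hg.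
    have [h2 [j [oj hit]]] := char2 (conj p2 hole).
    split=> [x _|x y hx hy hf]; first exact: into.
    move: hx hy; rewrite !inE => hx hy.
    apply: (hard h2 oj hit q0 Hq HQ Hq3 (gam2 h2 hx) (gam2 h2 hy)).
    exact: fc2 Hq h2 hf.
- split; first exact: NT1 hp k0.
  move=> H; have [h2 [j [oj hit]]] := char2 H.
  apply/eqP; apply/negPn/negP => hne.
  have [zt [ztQ _ zt1 _]] := zeta hne.
  rewrite addn1 in ztQ.
  by move: zt1; rewrite (qroot1 h2 oj hit ztQ) eqxx.
Qed.
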